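(* Let $A>0$, $R>0$, $\sigma\in\mathbb{R}$, and let $\lambda_1$ be the first eigenvalue of the problem $$u''+2Au'+\lambda u=0 \text{ on }[0,R],\qquad u'(0)=0,\qquad u'(R)=-\sigma u(R).$$ (a) For all $R>0$: $\lambda_1\geq2\sigma A-\sigma^2$ if $0\le\sigma\le A$, and $\lambda_1\ge A^2$ if $\sigma\ge A$. (b) If $\sigma<0$, then for all $R>0$, $\lambda_1\leq-\sigma^2+2A\sigma$. (c) If $\sigma>A$, there are positive constants $R_0,c_0$ depending only on $A$ and $\sigma$ such that for all $R\ge R_0$, $\lambda_1\geq A^2+\frac{\pi^2}{R^2}-\frac{c_0}{R^3}$.
   Context: The problem is the Sturm–Liouville eigenvalue problem for $-u''-2Au'$ on $L^2([0,R],e^{2Ax}dx)$ with the stated boundary conditions; its spectrum is discrete and $\lambda_1$ is the smallest eigenvalue. *)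

(* Defs.v *)
From Stdlib Require Import Reals Lra.
From Coquelicot Require Import Coquelicot.
Open Scope R_scope.

(* Since u1 is only constrained on [0,Rad], the
   derivatives at the endpoints are effectively one-sided. *)
Definition is_eigenvalue (A Rad sigma lam : R) : Prop :=
  exists u u1 u2 : R -> R,
    (forall x, 0 <= x <= Rad -> is_derive u x (u1 x)) /\
    (forall x, 0 <= x <= Rad -> is_derive u1 x (u2 x)) /\
    (forall x, 0 <= x <= Rad -> u2 x + 2 * A * u1 x + lam * u x = 0) /\
    u1 0 = 0 /\
    u1 Rad = - sigma * u Rad /\
    (exists x, 0 <= x <= Rad /\ u x <> 0).

Definition is_first_eigenvalue (A Rad sigma lam1 : R) : Prop :=
  is_eigenvalue A Rad sigma lam1 /\
  (forall mu, is_eigenvalue A Rad sigma mu -> lam1 <= mu).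

(* Main.v *)
Require Import Defs.
From Stdlib Require Import Reals Lra.
From Coquelicot Require Import Coquelicot.
Open Scope R_scope.

Lemma is_derive_eq (f : R -> R) x l l' : is_derive f x l -> l = l' -> is_derive f x l'.
Proof. intros H ->; exact H. Qed.

Lemma is_derive_Rminus (f g : R -> R) x df dg :
  is_derive f x df -> is_derive g x dg -> is_derive (fun t => f t - g t) x (df - dg).
Proof. intros Hf Hg. apply (is_derive_minus f g x df dg Hf Hg). Qed.

Lemma wr_const A lam Rad p p1 p2 q q1 q2 :
  (forall x, 0 <= x <= Rad -> is_derive p x (p1 x)) ->
  (forall x, 0 <= x <= Rad -> is_derive p1 x (p2 x)) ->
  (forall x, 0 <= x <= Rad -> is_derive q x (q1 x)) ->
  (forall x, 0 <= x <= Rad -> is_derive q1 x (q2 x)) ->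
  (forall x, 0 <= x <= Rad -> p2 x + 2 * A * p1 x + lam * p x = 0) ->
  (forall x, 0 <= x <= Rad -> q2 x + 2 * A * q1 x + lam * q x = 0) ->
  forall x, 0 <= x <= Rad ->
    exp (2 * A * x) * (p x * q1 x - p1 x * q x) = p 0 * q1 0 - p1 0 * q 0.
Proof.
  intros Hp Hp1 Hq Hq1 Ep Eq x Hx.
  set (F := fun t => exp (2 * A * t) * (p t * q1 t - p1 t * q t)).
  assert (HD : forall t, 0 <= t <= Rad -> is_derive F t 0).
  { intros t Ht. unfold F.
    eapply is_derive_eq.
    - apply Derive.is_derive_mult.
      + auto_derive; [exact I|]. reflexivity.
      + apply is_derive_Rminus; apply Derive.is_derive_mult; auto.
    - simpl. specialize (Ep t Ht). specialize (Eq t Ht).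
      replace (p2 t) with (- 2 * A * p1 t - lam * p t) by lra.
      replace (q2 t) with (- 2 * A * q1 t - lam * q t) by lra.
      unfold minus, plus, opp; simpl. ring. }
  destruct (MVT_gen F 0 x (fun _ => 0)) as [c [_ Hc]].
  - intros t Ht. apply HD. revert Ht. unfold Rmin, Rmax.
    destruct (Rle_dec 0 x); lra.
  - intros t Ht. apply continuity_pt_filterlim. apply (ex_derive_continuous (K:=R_AbsRing) (V:=R_NormedModule) F).
    eexists. apply HD. revert Ht. unfold Rmin, Rmax.
    destruct (Rle_dec 0 x); lra.
  - unfold F in Hc. rewrite Rmult_0_r, Rmult_0_l, exp_0 in Hc. lra.
Qed.
Lemma char_eq A Rad sigma lam f f1 f2 g g1 g2 :
  0 <= Rad ->
  (forall x, is_derive f x (f1 x)) -> (forall x, is_derive f1 x (f2 x)) ->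
  (forall x, f2 x + 2 * A * f1 x + lam * f x = 0) ->
  (forall x, is_derive g x (g1 x)) -> (forall x, is_derive g1 x (g2 x)) ->
  (forall x, g2 x + 2 * A * g1 x + lam * g x = 0) ->
  f1 0 = 0 -> f 0 <> 0 -> g 0 = 0 -> g1 0 <> 0 ->
  is_eigenvalue A Rad sigma lam -> f1 Rad + sigma * f Rad = 0.
Proof.
  intros HR Hf Hf1 Ef Hg Hg1 Eg F10 F0 G0 G10 Heig.
  destruct Heig as (u & u1 & u2 & Hu & Hu1 & Eu & U10 & UR & x0 & Hx0 & Ux0).
  assert (W1 := wr_const A lam Rad u u1 u2 f f1 f2 Hu Hu1
     (fun x _ => Hf x) (fun x _ => Hf1 x) Eu (fun x _ => Ef x)).
  assert (W2 := wr_const A lam Rad u u1 u2 g g1 g2 Hu Hu1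
     (fun x _ => Hg x) (fun x _ => Hg1 x) Eu (fun x _ => Eg x)).
  assert (W3 := wr_const A lam Rad f f1 f2 g g1 g2
     (fun x _ => Hf x) (fun x _ => Hf1 x) (fun x _ => Hg x) (fun x _ => Hg1 x)
     (fun x _ => Ef x) (fun x _ => Eg x)).
  rewrite U10, F10, G0 in *.
  assert (HRR : 0 <= Rad <= Rad) by lra.
  assert (E1 : u Rad * f1 Rad - u1 Rad * f Rad = 0).
  { specialize (W1 Rad HRR). assert (exp (2*A*Rad) > 0) by apply exp_pos.
    assert (W: exp (2 * A * Rad) * (u Rad * f1 Rad - u1 Rad * f Rad) = 0) by (rewrite W1; ring).
    destruct (Rmult_integral _ _ W); lra. }
  rewrite UR in E1.
  destruct (Req_dec (u Rad) 0) as [Hz | Hnz].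
  2: { apply (Rmult_eq_reg_l (u Rad)); [|exact Hnz]. lra. }
  exfalso.
  assert (U0 : u 0 = 0).
  { specialize (W2 Rad HRR). rewrite UR, Hz in W2.
    assert (H: u 0 * g1 0 = 0).
    { transitivity (u 0 * g1 0 - 0 * 0); [ring|]. rewrite <- W2. ring. }
    destruct (Rmult_integral _ _ H); tauto. }
  assert (A1 : u x0 * f1 x0 - u1 x0 * f x0 = 0).
  { specialize (W1 x0 Hx0). assert (exp (2*A*x0) > 0) by apply exp_pos.
    assert (W: exp (2 * A * x0) * (u x0 * f1 x0 - u1 x0 * f x0) = 0) by (rewrite W1; ring).
    destruct (Rmult_integral _ _ W); lra. }
  assert (A2 : u x0 * g1 x0 - u1 x0 * g x0 = 0).
  { specialize (W2 x0 Hx0). assert (exp (2*A*x0) > 0) by apply exp_pos.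
    assert (W: exp (2 * A * x0) * (u x0 * g1 x0 - u1 x0 * g x0) = 0) by (rewrite W2, U0; ring).
    destruct (Rmult_integral _ _ W); lra. }
  assert (A3 : f x0 * g1 x0 - f1 x0 * g x0 <> 0).
  { specialize (W3 x0 Hx0).
    intro H. rewrite H, Rmult_0_r in W3.
    assert (W: f 0 * g1 0 = 0) by nra.
    destruct (Rmult_integral _ _ W); tauto. }
  apply A3. apply (Rmult_eq_reg_l (u x0)); [|exact Ux0].
  replace (u x0 * (f x0 * g1 x0 - f1 x0 * g x0)) with
    (f x0 * (u x0 * g1 x0 - u1 x0 * g x0) - g x0 * (u x0 * f1 x0 - u1 x0 * f x0)) by ring.
  rewrite A1, A2. ring.
Qed.
Definition fN A k x := (k+A)*exp((k-A)*x) + (k-A)*exp(-(k+A)*x).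
Definition fN1 A k x := (k*k-A*A)*(exp((k-A)*x) - exp(-(k+A)*x)).
Definition fN2 A k x := (k*k-A*A)*((k-A)*exp((k-A)*x) + (k+A)*exp(-(k+A)*x)).
Definition gN A k x := exp((k-A)*x) - exp(-(k+A)*x).
Definition gN1 A k x := (k-A)*exp((k-A)*x) + (k+A)*exp(-(k+A)*x).
Definition gN2 A k x := (k-A)*(k-A)*exp((k-A)*x) - (k+A)*(k+A)*exp(-(k+A)*x).

Lemma fN_d A k x : is_derive (fN A k) x (fN1 A k x).
Proof. unfold fN, fN1. auto_derive; auto. ring. Qed.
Lemma fN1_d A k x : is_derive (fN1 A k) x (fN2 A k x).
Proof. unfold fN1, fN2. auto_derive; auto. ring. Qed.
Lemma fN_e A k x : fN2 A k x + 2*A*fN1 A k x + (A*A-k*k)*fN A k x = 0.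
Proof. unfold fN, fN1, fN2. ring. Qed.
Lemma gN_d A k x : is_derive (gN A k) x (gN1 A k x).
Proof. unfold gN, gN1. auto_derive; auto. ring. Qed.
Lemma gN1_d A k x : is_derive (gN1 A k) x (gN2 A k x).
Proof. unfold gN1, gN2. auto_derive; auto. ring. Qed.
Lemma gN_e A k x : gN2 A k x + 2*A*gN1 A k x + (A*A-k*k)*gN A k x = 0.
Proof. unfold gN, gN1, gN2. ring. Qed.

Definition fZ A x := exp(-A*x)*(1+A*x).
Definition fZ1 A x := -(A*A)*x*exp(-A*x).
Definition fZ2 A x := A*A*exp(-A*x)*(A*x-1).
Definition gZ A x := x*exp(-A*x).
Definition gZ1 A x := exp(-A*x)*(1-A*x).
Definition gZ2 A x := exp(-A*x)*(A*A*x-2*A).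
Lemma fZ_d A x : is_derive (fZ A) x (fZ1 A x).
Proof. unfold fZ, fZ1. auto_derive; auto. ring. Qed.
Lemma fZ1_d A x : is_derive (fZ1 A) x (fZ2 A x).
Proof. unfold fZ1, fZ2. auto_derive; auto. ring. Qed.
Lemma fZ_e A x : fZ2 A x + 2*A*fZ1 A x + (A*A)*fZ A x = 0.
Proof. unfold fZ, fZ1, fZ2. ring. Qed.
Lemma gZ_d A x : is_derive (gZ A) x (gZ1 A x).
Proof. unfold gZ, gZ1. auto_derive; auto. ring. Qed.
Lemma gZ1_d A x : is_derive (gZ1 A) x (gZ2 A x).
Proof. unfold gZ1, gZ2. auto_derive; auto. ring. Qed.
Lemma gZ_e A x : gZ2 A x + 2*A*gZ1 A x + (A*A)*gZ A x = 0.
Proof. unfold gZ, gZ1, gZ2. ring. Qed.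

Definition fP A n x := exp(-A*x)*(n*cos(n*x) + A*sin(n*x)).
Definition fP1 A n x := -(n*n+A*A)*exp(-A*x)*sin(n*x).
Definition fP2 A n x := -(n*n+A*A)*exp(-A*x)*(n*cos(n*x) - A*sin(n*x)).
Definition gP A n x := exp(-A*x)*sin(n*x).
Definition gP1 A n x := exp(-A*x)*(n*cos(n*x) - A*sin(n*x)).
Definition gP2 A n x := exp(-A*x)*((A*A-n*n)*sin(n*x) - 2*A*n*cos(n*x)).
Lemma fP_d A n x : is_derive (fP A n) x (fP1 A n x).
Proof. unfold fP, fP1. auto_derive; auto. ring. Qed.
Lemma fP1_d A n x : is_derive (fP1 A n) x (fP2 A n x).
Proof. unfold fP1, fP2. auto_derive; auto. ring. Qed.
Lemma fP_e A n x : fP2 A n x + 2*A*fP1 A n x + (A*A+n*n)*fP A n x = 0.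
Proof. unfold fP, fP1, fP2. ring. Qed.
Lemma gP_d A n x : is_derive (gP A n) x (gP1 A n x).
Proof. unfold gP, gP1. auto_derive; auto. ring. Qed.
Lemma gP1_d A n x : is_derive (gP1 A n) x (gP2 A n x).
Proof. unfold gP1, gP2. auto_derive; auto. ring. Qed.
Lemma gP_e A n x : gP2 A n x + 2*A*gP1 A n x + (A*A+n*n)*gP A n x = 0.
Proof. unfold gP, gP1, gP2. ring. Qed.

Lemma sin_lb3 a : 0 <= a <= 2 -> a / 3 <= sin a.
Proof.
  intros Ha. assert (HP := PI2_3_2).
  destruct (SIN a) as [H _]; try lra.
  assert (E : sin_lb a = a - a^3/6 + a^5/120 - a^7/5040).
  { unfold sin_lb, sin_approx, sin_term. simpl. field. }
  rewrite E in H.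
  assert (0 <= a^5/120 - a^7/5040).
  { assert (a^7 = a^5 * (a*a)) by ring. assert (0 <= a^5) by (apply pow_le; lra).
    rewrite H0. assert (a*a <= 4) by nra. nra. }
  assert (a^3 <= 4 * a) by (simpl; nra).
  lra.
Qed.

Lemma neg_case A Rad sigma k : 0 < A -> 0 < Rad -> 0 <= sigma -> 0 < k ->
  A - sigma < k -> ~ is_eigenvalue A Rad sigma (A*A - k*k).
Proof.
  intros hA hR hs hk hB Heig.
  assert (H := char_eq A Rad sigma (A*A-k*k) (fN A k) (fN1 A k) (fN2 A k)
     (gN A k) (gN1 A k) (gN2 A k) ltac:(lra) (fN_d A k) (fN1_d A k) (fN_e A k)
     (gN_d A k) (gN1_d A k) (gN_e A k)).
  assert (C1 : fN1 A k 0 = 0) by (unfold fN1; rewrite ?Rmult_0_r, ?exp_0; ring).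
  assert (C2 : fN A k 0 <> 0) by (unfold fN; rewrite ?Rmult_0_r, ?exp_0; try lra; ring_simplify; lra).
  assert (C3 : gN A k 0 = 0) by (unfold gN; rewrite ?Rmult_0_r, ?exp_0; ring).
  assert (C4 : gN1 A k 0 <> 0) by (unfold gN1; rewrite ?Rmult_0_r, ?exp_0; try lra; ring_simplify; lra).
  specialize (H C1 C2 C3 C4 Heig).
  unfold fN, fN1, fN2, gN, gN1, gN2 in H.
  set (e1 := exp ((k-A)*Rad)) in H. set (e2 := exp (-(k+A)*Rad)) in H.
  assert (He : e2 < e1) by (apply exp_increasing; nra).
  assert (He2 : 0 < e2) by apply exp_pos.
  assert (Hid : (k*k-A*A)*(e1-e2) + sigma*((k+A)*e1 + (k-A)*e2)
     = (k+A)*(k-(A-sigma))*(e1-e2) + 2*k*sigma*e2) by ring.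
  assert (0 < (k+A)*(k-(A-sigma))*(e1-e2)).
  { apply Rmult_lt_0_compat; [|lra]. apply Rmult_lt_0_compat; lra. }
  assert (0 <= 2*k*sigma*e2).
  { apply Rmult_le_pos; [|lra]. apply Rmult_le_pos; lra. }
  lra.
Qed.

Lemma low_bound A Rad sigma lam : 0 < A -> 0 < Rad -> 0 <= sigma ->
  is_eigenvalue A Rad sigma lam -> lam < A*A ->
  A - sigma < sqrt (A*A - lam) -> False.
Proof.
  intros hA hR hs Heig Hl Hk.
  set (k := sqrt (A*A - lam)) in *.
  assert (hk : 0 < k) by (apply sqrt_lt_R0; lra).
  assert (hkk : k * k = A*A - lam) by (apply sqrt_sqrt; lra).
  apply (neg_case A Rad sigma k); auto.
  replace (A*A - k*k) with lam by lra. exact Heig.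
Qed.

Lemma zero_case A Rad sigma : 0 < A -> 0 < Rad -> A < sigma ->
  ~ is_eigenvalue A Rad sigma (A*A).
Proof.
  intros hA hR hs Heig.
  assert (H := char_eq A Rad sigma (A*A) (fZ A) (fZ1 A) (fZ2 A)
     (gZ A) (gZ1 A) (gZ2 A) ltac:(lra) (fZ_d A) (fZ1_d A) (fZ_e A)
     (gZ_d A) (gZ1_d A) (gZ_e A)).
  assert (C1 : fZ1 A 0 = 0) by (unfold fZ1; rewrite ?Rmult_0_r, ?exp_0; ring).
  assert (C2 : fZ A 0 <> 0) by (unfold fZ; rewrite ?Rmult_0_r, ?exp_0; try lra; ring_simplify; lra).
  assert (C3 : gZ A 0 = 0) by (unfold gZ; rewrite ?Rmult_0_r, ?exp_0; ring).
  assert (C4 : gZ1 A 0 <> 0) by (unfold gZ1; rewrite ?Rmult_0_r, ?exp_0; try lra; ring_simplify; lra).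
  specialize (H C1 C2 C3 C4 Heig).
  unfold fZ, fZ1, fZ2, gZ, gZ1, gZ2 in H.
  set (e := exp (-A*Rad)) in H.
  assert (He : 0 < e) by apply exp_pos.
  assert (Hid : -(A*A)*Rad*e + sigma*(e*(1+A*Rad)) = e * (sigma + A*Rad*(sigma-A))) by ring.
  assert (0 < e * (sigma + A*Rad*(sigma-A))).
  { apply Rmult_lt_0_compat; [lra|]. assert (0 < A*Rad*(sigma-A)).
    { apply Rmult_lt_0_compat; [|lra]. apply Rmult_lt_0_compat; lra. } lra. }
  lra.
Qed.

Lemma pos_case A Rad sigma n : 0 < A -> 0 <= Rad -> 0 < n ->
  is_eigenvalue A Rad sigma (A*A + n*n) ->
  sigma * n * cos (n*Rad) = (n*n + A*A - sigma*A) * sin (n*Rad).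
Proof.
  intros hA hR hn Heig.
  assert (H := char_eq A Rad sigma (A*A+n*n) (fP A n) (fP1 A n) (fP2 A n)
     (gP A n) (gP1 A n) (gP2 A n) hR (fP_d A n) (fP1_d A n) (fP_e A n)
     (gP_d A n) (gP1_d A n) (gP_e A n)).
  assert (C1 : fP1 A n 0 = 0) by (unfold fP1; rewrite ?Rmult_0_r, ?exp_0, ?sin_0, ?cos_0; ring).
  assert (C2 : fP A n 0 <> 0) by (unfold fP; rewrite ?Rmult_0_r, ?exp_0, ?sin_0, ?cos_0; try lra; ring_simplify; lra).
  assert (C3 : gP A n 0 = 0) by (unfold gP; rewrite ?Rmult_0_r, ?exp_0, ?sin_0, ?cos_0; ring).
  assert (C4 : gP1 A n 0 <> 0) by (unfold gP1; rewrite ?Rmult_0_r, ?exp_0, ?sin_0, ?cos_0; try lra; ring_simplify; lra).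
  specialize (H C1 C2 C3 C4 Heig).
  unfold fP, fP1, fP2, gP, gP1, gP2 in H.
  set (e := exp (-A*Rad)) in H.
  assert (He : 0 < e) by apply exp_pos.
  apply (Rmult_eq_reg_l e); [|lra].
  assert (X: e*(sigma*n*cos(n*Rad)) - e*((n*n+A*A-sigma*A)*sin(n*Rad)) = -(n*n+A*A)*e*sin(n*Rad) + sigma*(e*(n*cos(n*Rad)+A*sin(n*Rad)))) by ring.
  lra.
Qed.

Lemma partA A sigma Rad lam1 : 0 < A -> 0 < Rad -> is_first_eigenvalue A Rad sigma lam1 ->
  (0 <= sigma <= A -> 2 * sigma * A - sigma ^ 2 <= lam1) /\
  (A <= sigma -> A ^ 2 <= lam1).
Proof.
  intros hA hR [Heig _]. split.
  - intros [s0 sA]. destruct (Rle_lt_dec (2 * sigma * A - sigma ^ 2) lam1) as [h|h]; auto.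
    exfalso. apply (low_bound A Rad sigma lam1); auto; [simpl in h; nra|].
    set (k := sqrt (A*A - lam1)).
    assert (hk : 0 < k) by (apply sqrt_lt_R0; simpl in h; nra).
    assert (hkk : k * k = A*A - lam1) by (apply sqrt_sqrt; simpl in h; nra).
    simpl in h. nra.
  - intros sA. destruct (Rle_lt_dec (A ^ 2) lam1) as [h|h]; auto.
    exfalso. simpl in h. apply (low_bound A Rad sigma lam1); auto; try lra.
    assert (0 < sqrt (A*A - lam1)) by (apply sqrt_lt_R0; lra). lra.
Qed.

Lemma partB A sigma Rad lam1 : 0 < A -> sigma < 0 -> 0 < Rad ->
  is_first_eigenvalue A Rad sigma lam1 -> lam1 <= - sigma ^ 2 + 2 * A * sigma.
Proof.
  intros hA hs hR [_ Hmin].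
  set (B := A - sigma).
  set (g := fun k => (k+A)*(k-B)*exp(2*k*Rad) - (k-A)*(k+B)).
  assert (Hc : continuity g).
  { intro x. apply continuity_pt_filterlim.
    apply (ex_derive_continuous (K:=R_AbsRing) (V:=R_NormedModule) g).
    unfold g. auto_derive. auto. }
  assert (HB : A < B) by (unfold B; lra).
  assert (g1 : g B < 0).
  { unfold g. replace ((B+A)*(B-B)*exp(2*B*Rad)) with 0 by ring.
    assert (0 < (B-A)*(B+B)) by (apply Rmult_lt_0_compat; lra). lra. }
  set (r := / Rad).
  assert (hr : 0 < r) by (apply Rinv_0_lt_compat; lra).
  assert (g2 : 0 < g (B + r)).
  { unfold g. set (k := B + r).
    assert (HE : 1 + 2*k*Rad < exp (2*k*Rad)).
    { apply exp_ineq1. assert (0 < 2*k*Rad) by (unfold k; nra). lra. }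
    assert (Hkr : k - B = r) by (unfold k; ring).
    rewrite Hkr.
    assert (Hr : r * Rad = 1) by (unfold r; field; lra).
    assert (hkA : 0 < k + A) by (unfold k; lra).
    assert (H1 : (k+A)*r*(1 + 2*k*Rad) < (k+A)*r*exp(2*k*Rad)).
    { apply Rmult_lt_compat_l; [nra|exact HE]. }
    assert (H2 : (k+A)*r*(1 + 2*k*Rad) = (k+A)*(r + 2*k)) by
      (replace ((k+A)*r*(1+2*k*Rad)) with ((k+A)*(r + 2*k*(r*Rad))) by ring; rewrite Hr; ring).
    assert (H3 : (k-A)*(k+B) <= (k+A)*(k+B)) by (apply Rmult_le_compat_r; unfold k; lra).
    assert (H4 : (k+A)*(k+B) <= (k+A)*(2*k)) by (apply Rmult_le_compat_l; unfold k; lra).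
    assert (H5 : (k+A)*(2*k) < (k+A)*(r+2*k)) by (apply Rmult_lt_compat_l; lra).
    lra. }
  destruct (IVT g B (B + r) Hc ltac:(lra) g1 g2) as [k [Hk Hgk]].
  assert (hk : 0 < k) by lra.
  assert (Hev : is_eigenvalue A Rad sigma (A*A - k*k)).
  { exists (fN A k), (fN1 A k), (fN2 A k). split; [|split; [|split; [|split; [|split]]]].
    - intros x _. apply fN_d.
    - intros x _. apply fN1_d.
    - intros x _. apply fN_e.
    - unfold fN1. rewrite !Rmult_0_r, exp_0. ring.
    - unfold fN1, fN. unfold g in Hgk.
      assert (Hx : exp ((k-A)*Rad) = exp (2*k*Rad) * exp (-(k+A)*Rad)).
      { rewrite <- exp_plus. f_equal. ring. }
      rewrite Hx.
      set (E := exp (2*k*Rad)) in *. set (e2 := exp (-(k+A)*Rad)).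
      assert (X : (k*k-A*A)*(E*e2 - e2) + sigma*((k+A)*(E*e2) + (k-A)*e2)
                  = e2 * ((k+A)*(k-B)*E - (k-A)*(k+B))) by (unfold B; ring).
      rewrite Hgk, Rmult_0_r in X. lra.
    - exists 0. split; [lra|]. unfold fN. rewrite !Rmult_0_r, exp_0. lra. }
  specialize (Hmin _ Hev). simpl. 
  assert (B*B <= k*k) by nra.
  unfold B in *. nra.
Qed.

Lemma partC A sigma : 0 < A -> A < sigma ->
  exists R0 c0, 0 < R0 /\ 0 < c0 /\
    forall Rad lam1, R0 <= Rad -> is_first_eigenvalue A Rad sigma lam1 ->
      A ^ 2 + PI ^ 2 / Rad ^ 2 - c0 / Rad ^ 3 <= lam1.
Proof.
  intros hA hs.
  set (m2 := A * (sigma - A)).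
  assert (hm : 0 < m2) by (unfold m2; apply Rmult_lt_0_compat; lra).
  set (c := 6 * sigma / m2).
  assert (hc : 0 < c) by (unfold c; apply Rdiv_lt_0_compat; lra).
  assert (hcm : c * m2 = 6 * sigma) by (unfold c; field; lra).
  set (c0 := 2 * c * (PI * PI)).
  assert (hPI : 0 < PI) by apply PI_RGT_0.
  assert (hc0 : 0 < c0) by (unfold c0; apply Rmult_lt_0_compat; [lra|nra]).
  set (R0 := 2 * PI * (1 + / m2)).
  assert (him : 0 < / m2) by (apply Rinv_0_lt_compat; lra).
  assert (hR0 : 0 < R0) by (unfold R0; nra).
  assert (hR0m : 8 * (PI * PI) <= m2 * (R0 * R0)).
  { assert (X : m2 * (R0 * R0) = 4 * (PI*PI) * (m2 + 2 + / m2)) by (unfold R0; field; lra).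
    rewrite X. assert (0 < PI * PI) by nra. nra. }
  exists R0, c0. split; [exact hR0|]. split; [exact hc0|].
  intros Rad lam1 HR [Heig _].
  assert (hR : 0 < Rad) by lra.
  destruct (Rle_lt_dec (A ^ 2 + PI ^ 2 / Rad ^ 2 - c0 / Rad ^ 3) lam1) as [h|h]; auto.
  exfalso.
  destruct (total_order_T lam1 (A*A)) as [[lt|eq]|gt].
  - apply (low_bound A Rad sigma lam1); auto; try lra.
    assert (0 <= sqrt (A*A - lam1)) by apply sqrt_pos. lra.
  - subst lam1. exact (zero_case A Rad sigma hA hR hs Heig).
  - set (n := sqrt (lam1 - A*A)).
    assert (hn : 0 < n) by (apply sqrt_lt_R0; lra).
    assert (hnn : n * n = lam1 - A*A) by (apply sqrt_sqrt; lra).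
    replace lam1 with (A*A + n*n) in Heig, h by lra.
    assert (Eq := pos_case A Rad sigma n hA ltac:(lra) hn Heig).
    set (R3 := Rad * Rad * Rad).
    assert (hR3 : 0 < R3) by (unfold R3; repeat apply Rmult_lt_0_compat; lra).
    assert (hb : n * n * R3 < PI * PI * Rad - c0).
    { assert (X1 : PI ^ 2 / Rad ^ 2 * R3 = PI * PI * Rad) by (unfold R3; field; lra).
      assert (X2 : c0 / Rad ^ 3 * R3 = c0) by (unfold R3; field; lra).
      assert (h' : n * n < PI ^ 2 / Rad ^ 2 - c0 / Rad ^ 3) by (simpl in h |- *; lra).
      apply (Rmult_lt_compat_r R3) in h'; [|exact hR3].
      rewrite Rmult_minus_distr_r, X1, X2 in h'. exact h'. }
    assert (h2 : n * n * (Rad * Rad) < PI * PI).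
    { apply (Rmult_lt_reg_r Rad); [lra|].
      replace (n * n * (Rad * Rad) * Rad) with (n * n * R3) by (unfold R3; ring). lra. }
    assert (h3 : n * Rad < PI) by nra.
    assert (hRR : R0 * R0 <= Rad * Rad) by nra.
    assert (h5 : 8 * (n * n) < m2).
    { assert (8 * (PI*PI) <= m2 * (Rad*Rad)) by nra.
      assert (0 < n * n) by nra.
      assert (8 * (PI * PI) * (n*n) <= m2 * (Rad*Rad) * (n*n)) by nra.
      assert (m2 * (Rad*Rad) * (n*n) < m2 * (PI*PI)) by nra.
      nra. }
    set (t := n * Rad) in *.
    assert (ht : 0 < t) by (unfold t; nra).
    assert (hs0 : 0 < sin t) by (apply sin_gt_0; lra).
    assert (Hm2 : n*n + A*A - sigma*A = n*n - m2) by (unfold m2; ring).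
    rewrite Hm2 in Eq.
    assert (hcos : cos t < 0).
    { assert ((n*n - m2) * sin t < 0) by nra.
      assert (0 < sigma * n) by nra. nra. }
    assert (ht2 : PI / 2 < t).
    { destruct (Rle_lt_dec t (PI/2)) as [h6|h6]; auto.
      assert (0 <= cos t) by (apply cos_ge_0; lra). lra. }
    set (p := PI - t).
    assert (Hsp : sin p = sin t) by (unfold p; apply sin_PI_x).
    assert (Hcp : cos p = - cos t) by (unfold p; apply Rtrigo_facts.cos_pi_minus).
    assert (hP4 := PI_4).
    assert (hp : 0 <= p <= 2) by (unfold p; lra).
    assert (Hl := sin_lb3 p hp).
    assert (Hcb := COS_bound p).
    assert (H7 : (m2 - n*n) * sin t <= sigma * n).
    { assert ((m2 - n*n) * sin t = sigma * n * cos p) by (rewrite Hcp; lra).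
      assert (0 < sigma * n) by nra. nra. }
    assert (H8 : m2 / 2 * sin t <= sigma * n) by nra.
    assert (H9 : p * m2 <= 6 * sigma * n).
    { assert (p / 3 * m2 <= sin t * m2) by (apply Rmult_le_compat_r; lra). lra. }
    assert (H10 : PI <= n * (Rad + c)).
    { assert (p * m2 <= c * m2 * n) by (rewrite hcm; lra).
      assert (p <= c * n) by nra.
      unfold p, t in *. nra. }
    assert (H11 : PI * PI * Rad - c0 = PI * PI * (Rad - 2 * c)) by (unfold c0; ring).
    destruct (Rle_lt_dec (Rad - 2 * c) 0) as [h12|h12].
    + assert (PI * PI * (Rad - 2 * c) <= 0) by nra. nra.
    + assert (H13 : PI * PI <= n * n * ((Rad + c) * (Rad + c))) by nra.
      assert (H14 : (Rad + c) * (Rad + c) * (Rad - 2*c) <= R3).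
      { unfold R3. nra. }
      assert (PI * PI * (Rad - 2*c) <= n * n * ((Rad + c) * (Rad + c)) * (Rad - 2*c))
        by (apply Rmult_le_compat_r; lra).
      assert (n * n * ((Rad + c) * (Rad + c) * (Rad - 2*c)) <= n * n * R3)
        by (apply Rmult_le_compat_l; nra).
      nra.
Qed.

Theorem lemma6p1 (A sigma : R) (hA : 0 < A) :
  (* (a) *)
  (forall Rad lam1, 0 < Rad -> is_first_eigenvalue A Rad sigma lam1 ->
     (0 <= sigma <= A -> 2 * sigma * A - sigma ^ 2 <= lam1) /\
     (A <= sigma -> A ^ 2 <= lam1)) /\
  (* (b) *)
  (sigma < 0 ->
     forall Rad lam1, 0 < Rad -> is_first_eigenvalue A Rad sigma lam1 ->
       lam1 <= - sigma ^ 2 + 2 * A * sigma) /\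
  (* (c) *)
  (A < sigma ->
     exists R0 c0, 0 < R0 /\ 0 < c0 /\
       forall Rad lam1, R0 <= Rad -> is_first_eigenvalue A Rad sigma lam1 ->
         A ^ 2 + PI ^ 2 / Rad ^ 2 - c0 / Rad ^ 3 <= lam1).
Proof.
  split; [|split].
  - intros Rad lam1 hR H. exact (partA A sigma Rad lam1 hA hR H).
  - intros hs Rad lam1 hR H. exact (partB A sigma Rad lam1 hA hs hR H).
  - intros hs. exact (partC A sigma hA hs).
Qed.
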